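(* Let $(X_i,Y_i)_{i\in[n+m]}$ be i.i.d. from a distribution $P_{XY}$ on $\mathcal X\times\mathcal Y$, where $(X_i,Y_i)_{i\in[n]}$ is the calibration sample and $(X_{n+i})_{i\in[m]}$ the test covariates. Let $C^\mu$ and $D^\mu$ be the estimated-probability rules described in the context, and assume that for every $x\in\mathcal X$ and all $0\le\mu_1<\mu_2$ we have $C^{\mu_1}(x)\subseteq C^{\mu_2}(x)$. Define $$\mu_\alpha=\min\left\{\mu\ge 0:\ \frac{\frac{1}{n+1}\left(\sum_{i=1}^n \mathbb 1\{Y_i\notin C^{\mu}(X_i)\}D^{\mu}(X_i)+1\right)}{\frac{1}{m}\left(1\vee\sum_{i=1}^m D^{\mu}(X_{n+i})\right)}\le\alpha\right\},$$ with $\mu_\alpha=\infty$ and $D^\infty\equiv 0$ if no such $\mu$ exists. Then $$\mathbb E\left[\frac{\sum_{i=1}^m \mathbb 1\{Y_{n+i}\notin C^{\mu_\alpha}(X_{n+i})\}D^{\mu_\alpha}(X_{n+i})}{1\vee\sum_{i=1}^m D^{\mu_\alpha}(X_{n+i})}\right]\le\alpha.$$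
   Context: Let $\alpha\in(0,1)$. $\mathcal I$ is a finite collection of subsets of $\mathcal Y$ (informative prediction sets) enumerated in a fixed lexicographic order, and $w:\mathcal I\to(0,B)$ is a bounded positive weight function. For each $x\in\mathcal X$ and $C\in\mathcal I$, $\hat p_C(x)\in[0,1]$ is a fixed (deterministic, e.g. obtained from independent training data) estimate of $\mathbb P(Y\in C\mid X=x)$. For $\mu\ge0$ define $\hat\ell_{x,C}(\mu)=w(C)\hat p_C(x)+\mu(\hat p_C(x)-(1-\alpha))$. $C^\mu(x)$ is a maximizer of $\hat\ell_{x,C}(\mu)$ over $C\in\mathcal I$, with ties broken in favor of the smallest weight $w(C)$ and then the smallest index in the fixed ordering; $D^\mu(x)=\mathbb 1\{\max_{C\in\mathcal I}\hat\ell_{x,C}(\mu)>0\}$. $a\vee b=\max(a,b)$. *)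

(* Defs.v *)
From HB Require Import structures.
From mathcomp Require Import all_boot all_order all_algebra.
From mathcomp Require Import all_classical all_reals all_analysis.
Set Implicit Arguments. Unset Strict Implicit. Unset Printing Implicit Defensive.
Import Order.TTheory GRing.Theory Num.Theory.
Local Open Scope ring_scope.
Local Open Scope classical_set_scope.

(* The collection of informative sets is indexed by 'I_k.+1 (nonempty,
   enumerated in the fixed order of the ordinals). *)

Definition lhat (R : numDomainType) (alpha w p mu : R) : R :=
  w * p + mu * (p - (1 - alpha)).

Definition prefer (R : realDomainType) (k : nat) (alpha : R)
  (w ph : 'I_k -> R) (mu : R) (i j : 'I_k) : bool :=
  (lhat alpha (w j) (ph j) mu < lhat alpha (w i) (ph i) mu)
  || ((lhat alpha (w i) (ph i) mu == lhat alpha (w j) (ph j) mu)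
      && ((w i < w j) || ((w i == w j) && (i < j)%N))).

(* index of C^mu(x), where ph i = phat_{C_i}(x) *)
Definition Cidx (R : realDomainType) (k : nat) (alpha : R)
  (w ph : 'I_k.+1 -> R) (mu : R) : 'I_k.+1 :=
  odflt ord0 [pick i | [forall j, (j != i) ==> prefer alpha w ph mu i j]].

Definition Dmu (R : realDomainType) (k : nat) (alpha : R)
  (w ph : 'I_k -> R) (mu : R) : bool :=
  [exists i, 0 < lhat alpha (w i) (ph i) mu].

Section Procedure.
Variables (R : realType) (X Y : Type) (k n m : nat) (alpha : R).
Variables (S : 'I_k.+1 -> set Y) (w : 'I_k.+1 -> R) (phat : 'I_k.+1 -> X -> R).

Definition Cset (mu : R) (x : X) : set Y :=
  S (Cidx alpha w (fun i => phat i x) mu).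
Definition Dv (mu : R) (x : X) : bool := Dmu alpha w (fun i => phat i x) mu.

Definition calib (i : 'I_n) : 'I_(n + m) := lshift m i.
Definition test (j : 'I_m) : 'I_(n + m) := rshift n j.

Definition mu_cond (xs : 'I_(n + m) -> X) (ys : 'I_(n + m) -> Y) (mu : R) : Prop :=
  ((\sum_(i < n) ((ys (calib i) \notin Cset mu (xs (calib i)))
                   && Dv mu (xs (calib i)))%:R + 1) / (n.+1)%:R)
  / (Num.max 1 (\sum_(j < m) (Dv mu (xs (test j)))%:R) / m%:R) <= alpha.

Definition is_mu_min xs ys (mu : R) : Prop :=
  0 <= mu /\ mu_cond xs ys mu /\
  (forall mu', 0 <= mu' -> mu_cond xs ys mu' -> mu <= mu').

(* mu_alpha : Some mu if the minimum exists, None stands for mu_alpha = oo *)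
Definition mu_alpha xs ys : option R :=
  match pselect (exists mu, is_mu_min xs ys mu) with
  | left H => Some (proj1_sig (cid H))
  | right _ => None
  end.

(* false discovery proportion on the test points; D^oo = 0 *)
Definition FDP xs ys : R :=
  match mu_alpha xs ys with
  | Some mu =>
      (\sum_(j < m) ((ys (test j) \notin Cset mu (xs (test j)))
                      && Dv mu (xs (test j)))%:R)
      / Num.max 1 (\sum_(j < m) (Dv mu (xs (test j)))%:R)
  | None => 0
  end.
End Procedure.

Definition iid (R : realType) (dO dZ : measure_display)
  (Omega : measurableType dO) (Z : measurableType dZ) (N : nat)
  (Pr : probability Omega R) (P : probability Z R) (Zs : 'I_N -> Omega -> Z) : Prop :=
  (forall i, measurable_fun setT (Zs i)) /\
  forall A : 'I_N -> set Z, (forall i, measurable (A i)) ->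
    fine (Pr (\bigcap_(i in [set: 'I_N]) (Zs i @^-1` A i)))
    = \prod_(i < N) fine (P (A i)).

Arguments FDP [R X Y k] n m alpha S w phat xs ys.

(* Main.v *)
Require Import Defs.
From HB Require Import structures.
From mathcomp Require Import all_boot all_order all_algebra.
From mathcomp Require Import fingroup perm.
From mathcomp Require Import all_classical all_reals all_analysis.
From mathcomp Require Import measurable_realfun.
From mathcomp.algebra_tactics Require Import ring lra.
Import Order.TTheory GRing.Theory Num.Theory.
Local Open Scope ring_scope.
Local Open Scope classical_set_scope.

Set Implicit Arguments. Unset Strict Implicit. Unset Printing Implicit Defensive.


Lemma meas_det (d : measure_display) (T : measurableType d) (I : finType)
  (beta : I -> T -> bool) (P : T -> bool) :
  (forall i, measurable_fun setT (beta i)) ->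
  (forall t t', (forall i, beta i t = beta i t') -> P t = P t') ->
  measurable_fun setT P.
Proof.
move=> mb det; apply: (measurable_fun_bool true); rewrite setTI.
pose A := [set f : {ffun I -> bool} | exists t, P t /\ forall i, beta i t = f i].
have -> : P @^-1` [set true] =
    \bigcup_(f in A) \bigcap_(i in [set: I]) (beta i @^-1` [set f i]).
  apply/seteqP; split => [t /= Pt|t [f [t0 [Pt0 e]]] /= h].
    exists [ffun i => beta i t]; first by exists t; split => // i; rewrite ffunE.
    by move=> i _ /=; rewrite ffunE.
  rewrite (det t t0) // => i; rewrite e; have := h i Logic.I; exact.
apply: fin_bigcup_measurable; first exact: finite_finset.
move=> f _; apply: fin_bigcap_measurable; first exact: finite_finset.
move=> i _; have := mb i measurableT [set f i] Logic.I; rewrite setTI; exact.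
Qed.

Lemma meas_inv (R : realType) : measurable_fun [set: R] (@GRing.inv R).
Proof.
have -> : (@GRing.inv R) = fun b => if 0 <= b then powR b (-1) else - powR (- b) (-1).
  apply/funext => b; case: ifP => b0; first by rewrite powR_inv1.
  by rewrite powR_inv1 ?invrN ?opprK // oppr_ge0 ltW // ltNge b0.
apply: measurable_fun_ifT.
- by apply: measurable_fun_ler => //; exact: measurable_cst.
- exact: measurable_powR.
- apply: measurable_funN.
  apply: (@measurableT_comp _ _ _ _ _ _ (fun x : R => powR x (-1)) _ (fun b : R => - b)).
    exact: measurable_powR.
  exact: measurable_funN.
Qed.

Lemma meas_finval (d : measure_display) (T : measurableType d) (R : realType)
  (f : T -> R) (s : seq R) :
  (forall t, f t \in s) -> (forall v, measurable_fun setT (fun t => f t == v)) ->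
  measurable_fun setT f.
Proof.
move=> fs mv _ B mB; rewrite setTI.
have -> : f @^-1` B = \big[setU/set0]_(v <- s)
     ([set t | f t == v] `&` [set _ | B v]).
  apply/seteqP; split => [t /= Bt|t].
    move: (fs t); clear fs; elim: s => // a s IH.
    rewrite in_cons big_cons => /orP [/eqP e|/IH h]; last by right.
    by left; split => /=; [rewrite e eqxx|rewrite -e].
  clear fs; elim: s => [|a s IH]; first by rewrite big_nil.
  by rewrite big_cons => -[[/= /eqP -> ]|/IH].
apply: bigsetU_measurable => v _; apply: measurableI.
- have := mv v measurableT [set true] Logic.I; rewrite setTI; exact.
- case: (pselect (B v)) => h.
    rewrite (_ : [set _ | B v] = setT) //.
    by apply/seteqP; split => // t _ /=.
  rewrite (_ : [set _ | B v] = set0) //.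
  by apply/seteqP; split => // t /=.
Qed.


Section Exch.
Context (R : realType) (dO dZ : measure_display) (Omega : measurableType dO)
  (Z : measurableType dZ) (N : nat) (Pr : probability Omega R) (P : probability Z R)
  (Zs : 'I_N -> Omega -> Z).
Hypothesis hiid : iid Pr P Zs.

Definition rects : set (set (N.-tuple Z)) :=
  [set B | exists A : 'I_N -> set Z, (forall i, measurable (A i)) /\
     B = \bigcap_(i in [set: 'I_N]) ((fun t => tnth t i) @^-1` A i)].

Lemma rects_meas : @measurable _ (N.-tuple Z) = <<s rects >>.
Proof.
apply/seteqP; split.
- apply: smallest_sub; first exact: smallest_sigma_algebra.
  move=> B; rewrite -bigcup_seq => -[i _ [A mA <-]].
  apply: sub_sigma_algebra; exists (fun j => if j == i then A else setT); split.
    by move=> j; case: ifP.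
  apply/seteqP; split => [t [_ /= At] j _ /=|t /= h].
    by case: ifP => // /eqP ->.
  by split => //; have := h i Logic.I; rewrite /= eqxx.
- apply: smallest_sub; first exact: sigma_algebra_measurable.
  move=> B [A [mA ->]]; apply: fin_bigcap_measurable; first exact: finite_finset.
  move=> i _; have := @measurable_tnth _ Z N i measurableT (A i) (mA i).
  by rewrite setTI.
Qed.

Lemma rects_setI : setI_closed rects.
Proof.
move=> B1 B2 [A1 [m1 ->]] [A2 [m2 ->]]; exists (fun i => A1 i `&` A2 i); split.
  by move=> i; apply: measurableI.
apply/seteqP; split => [t [h1 h2] i _|t h]; first by split; [exact: h1|exact: h2].
by split => i _; have [] := h i Logic.I.
Qed.

Definition tup (w : Omega) : N.-tuple Z := [tuple Zs i w | i < N].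
Definition tupP (s : {perm 'I_N}) (t : N.-tuple Z) : N.-tuple Z :=
  [tuple tnth t (s i) | i < N].

Lemma mtup : measurable_fun setT tup.
Proof.
apply/measurable_fun_tnthP => i.
rewrite (_ : _ \o _ = Zs i); first exact: hiid.1.
by apply/funext => w /=; rewrite tnth_mktuple.
Qed.

Lemma mtupP s : measurable_fun setT (tupP s).
Proof.
apply/measurable_fun_tnthP => i.
rewrite (_ : _ \o _ = (fun t => tnth t (s i))); first exact: measurable_tnth.
by apply/funext => w /=; rewrite tnth_mktuple.
Qed.

Lemma law_rect (A : 'I_N -> set Z) : (forall i, measurable (A i)) ->
  Pr (\bigcap_(i in [set: 'I_N]) (Zs i @^-1` A i)) =
  (\prod_(i < N) fine (P (A i)))%:E.
Proof.
move=> mA; rewrite -hiid.2 // fineK //; apply: fin_num_measure.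
apply: fin_bigcap_measurable; first exact: finite_finset.
move=> i _; have := hiid.1 i measurableT (A i) (mA i); by rewrite setTI.
Qed.

Lemma exch (s : {perm 'I_N}) (F : N.-tuple Z -> \bar R) :
  measurable_fun setT F -> (forall t, (0 <= F t)%E) ->
  (\int[Pr]_(w in setT) F (tup w) = \int[Pr]_(w in setT) F (tupP s (tup w)))%E.
Proof.
move=> mF F0.
have e1 := ge0_integral_pushforward mtup Pr measurableT mF (fun t _ => F0 t).
have mc : measurable_fun setT (tupP s \o tup).
  exact: measurableT_comp (mtupP s) mtup.
have e2 := ge0_integral_pushforward mc Pr measurableT mF (fun t _ => F0 t).
rewrite preimage_setT in e1 e2.
have eqm : forall A, measurable A -> pushforward Pr tup A = pushforward Pr (tupP s \o tup) A.
  move=> A mA.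
  apply: (@measure_unique _ _ _ rects (fun=> setT) rects_meas rects_setI _ _
    (measure_function_pushforward__canonical__measure_function_Measure Pr mtup)
    (measure_function_pushforward__canonical__measure_function_Measure Pr mc)) => //.
  - exists (fun=> setT); split => // ; apply/seteqP; split => // t _ i _ //.
  - by rewrite bigcup_const.
  - move=> B [A' [mA' ->]]; rewrite /= /pushforward.
    rewrite (_ : _ @^-1` _ = \bigcap_(i in [set: 'I_N]) (Zs i @^-1` A' i)); last first.
      apply/seteqP; split => w h i _; have := h i Logic.I; by rewrite /= tnth_mktuple.
    rewrite (_ : _ @^-1` _ = \bigcap_(i in [set: 'I_N]) (Zs i @^-1` A' (s^-1 i)%g)); last first.
      apply/seteqP; split => w h i _.
        have := h (s^-1 i)%g Logic.I; by rewrite /= !tnth_mktuple permKV.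
      have := h (s i) Logic.I; by rewrite /= !tnth_mktuple permK.
    rewrite !law_rect //; congr (_%:E).
    by rewrite [RHS](reindex_inj (@perm_inj _ s)) /=; apply: eq_bigr => i _; rewrite permK.
  - by move=> _; rewrite /= /pushforward preimage_setT probability_setT ltry.
rewrite -[LHS]e1 -[RHS]e2; apply: eq_measure_integral; first exact: mtup.
by move=> ? A mA _; exact: eqm.
Qed.

End Exch.


Section Det.
Context (R : realType) (X Y : Type) (k n m : nat) (alpha : R)
  (S : 'I_k.+1 -> set Y) (w : 'I_k.+1 -> R) (phat : 'I_k.+1 -> X -> R).
Hypotheses (ha : 0 < alpha < 1) (hm : (0 < m)%N) (hw : forall i, 0 < w i)
  (hp : forall i x, 0 <= phat i x <= 1)
  (hnest : forall x mu1 mu2, 0 <= mu1 -> mu1 < mu2 ->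
     Cset alpha S w phat mu1 x `<=` Cset alpha S w phat mu2 x).

Local Notation N := (n + m)%N.

Definition Vb (mu : R) (z : X * Y) : bool :=
  (z.2 \notin Cset alpha S w phat mu z.1) && Dv alpha w phat mu z.1.
Definition Db (mu : R) (z : X * Y) : bool := Dv alpha w phat mu z.1.

Lemma Dv_mono x mu1 mu2 : 0 <= mu1 -> mu1 <= mu2 ->
  Dv alpha w phat mu2 x -> Dv alpha w phat mu1 x.
Proof.
move=> h1 h12 /existsP [i hi]; apply/existsP; exists i; move: hi.
rewrite /lhat; have := hw i; have := hp i x; case/andP => p0 p1 w0.
case/andP: ha => a0 a1 h.
have [c0|c0] := leP 0 (phat i x - (1 - alpha)).
  have pp : 0 < phat i x by lra.
  have : 0 < w i * phat i x by apply: mulr_gt0.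
  have : 0 <= mu1 * (phat i x - (1 - alpha)) by apply: mulr_ge0.
  lra.
have : mu2 * (phat i x - (1 - alpha)) <= mu1 * (phat i x - (1 - alpha)).
  by rewrite ler_wnM2r // ltW.
lra.
Qed.

Lemma Vb_mono z mu1 mu2 : 0 <= mu1 -> mu1 <= mu2 -> Vb mu2 z -> Vb mu1 z.
Proof.
move=> h1; rewrite le_eqVlt => /orP [/eqP -> //|h12].
case/andP => hC hD; apply/andP; split; last exact: Dv_mono (ltW h12) hD.
apply: contra hC; rewrite !inE => hz; exact: hnest hz.
Qed.

Lemma Vb_Db mu z : Vb mu z -> Db mu z.
Proof. by case/andP. Qed.


Definition ncal (j : 'I_m) (d : 'I_N -> X * Y) (mu : R) : nat :=
  (\sum_(i < n) Vb mu (d (calib m i)) + Vb mu (d (test n j)))%N.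
Definition nD (j : 'I_m) (d : 'I_N -> X * Y) (mu : R) : nat :=
  (\sum_(l < m | l != j) Db mu (d (test n l)))%N.
Definition condj j d mu : bool :=
  (ncal j d mu)%:R * m%:R <= alpha * n.+1%:R * (nD j d mu).+1%:R.

Definition is_minb (P : R -> bool) (mu : R) : Prop :=
  0 <= mu /\ P mu /\ forall mu', 0 <= mu' -> P mu' -> mu <= mu'.

Lemma is_minb_uniq P a b : is_minb P a -> is_minb P b -> a = b.
Proof.
move=> [a0 [Pa ha1]] [b0 [Pb hb1]]; apply/eqP; rewrite eq_le ha1 // hb1 //.
Qed.

Definition muj j d : option R :=
  match pselect (exists mu, is_minb (condj j d) mu) with
  | left H => Some (proj1_sig (cid H))
  | right _ => None
  end.

Lemma muj_some j d mu : is_minb (condj j d) mu -> muj j d = Some mu.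
Proof.
move=> h; rewrite /muj; case: pselect => [H|[]]; last by exists mu.
by case: (cid H) => mu' h' /=; rewrite (is_minb_uniq h' h).
Qed.

Lemma mujP j d : (exists mu, muj j d = Some mu /\ is_minb (condj j d) mu) \/
   (muj j d = None /\ ~ exists mu, is_minb (condj j d) mu).
Proof.
rewrite /muj; case: pselect => [H|H]; last by right.
by left; case: (cid H) => mu h /=; exists mu.
Qed.

Definition Hji (j : 'I_m) (i : 'I_N) d : R :=
  match muj j d with
  | Some mu => (Vb mu (d i))%:R / (ncal j d mu)%:R
  | None => 0
  end.

Lemma Hji_ge0 j i d : 0 <= Hji j i d.
Proof. by rewrite /Hji; case: muj => // mu; apply: divr_ge0. Qed.

Lemma mu_condE (xs : 'I_N -> X) (ys : 'I_N -> Y) mu :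
  mu_cond alpha S w phat xs ys mu <->
  (\sum_(i < n) ((ys (calib m i) \notin Cset alpha S w phat mu (xs (calib m i)))
                   && Dv alpha w phat mu (xs (calib m i)))%:R + 1) * m%:R
   <= alpha * n.+1%:R * Num.max 1 (\sum_(j < m) (Dv alpha w phat mu (xs (test n j)))%:R).
Proof.
rewrite /mu_cond.
set A := (X in (X + 1) / _); set M := Num.max _ _.
have A0 : 0 <= A by apply: sumr_ge0.
have M1 : 1 <= M by rewrite le_max lexx.
have m0 : 0 < m%:R :> R by rewrite ltr0n.
have n0 : 0 < n.+1%:R :> R by rewrite ltr0n.
have M0 : 0 < M by apply: lt_le_trans M1.
have -> : (A + 1) / n.+1%:R / (M / m%:R) = ((A + 1) * m%:R) / (n.+1%:R * M).
  field; apply/and3P; split; first exact: lt0r_neq0.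
    by rewrite addrC natr1 pnatr_eq0.
  by rewrite pnatr_eq0 -lt0n.
rewrite ler_pdivrMr ?mulr_gt0 //.
by rewrite mulrA.
Qed.


Lemma condjE (xs : 'I_N -> X) (ys : 'I_N -> Y) j mu :
  Vb mu (xs (test n j), ys (test n j)) ->
  (condj j (fun i => (xs i, ys i)) mu <-> mu_cond alpha S w phat xs ys mu).
Proof.
move=> hv; rewrite mu_condE.
have e1 : (ncal j (fun i => (xs i, ys i)) mu)%:R =
   (\sum_(i < n) ((ys (calib m i) \notin Cset alpha S w phat mu (xs (calib m i)))
                   && Dv alpha w phat mu (xs (calib m i)))%:R + 1) :> R.
  by rewrite /ncal hv natrD natr_sum.
have e2 : (nD j (fun i => (xs i, ys i)) mu).+1%:R =
   Num.max 1 (\sum_(l < m) (Dv alpha w phat mu (xs (test n l)))%:R) :> R.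
  have hD : Dv alpha w phat mu (xs (test n j)) := Vb_Db hv.
  rewrite (bigD1 j) //= hD /nD -natr1 natr_sum addrC max_r //.
  rewrite (_ : true%:R = 1 :> R) // lerDr; exact: sumr_ge0.
by rewrite /condj e1 e2.
Qed.

Lemma FDP_bound (xs : 'I_N -> X) (ys : 'I_N -> Y) :
  FDP n m alpha S w phat xs ys <=
  alpha * n.+1%:R / m%:R * \sum_(j < m) Hji j (test n j) (fun i => (xs i, ys i)).
Proof.
set d := fun i => (xs i, ys i).
have c0 : 0 <= alpha * n.+1%:R / m%:R.
  by case/andP: ha => a0 _; rewrite divr_ge0 // mulr_ge0 // ltW.
rewrite /FDP; case E: (mu_alpha _ _ _ _ _ _) => [mu|]; last first.
  by rewrite mulr_ge0 // sumr_ge0 // => j _; apply: Hji_ge0.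
move: E; rewrite /mu_alpha; case: pselect => // H [<-].
case: (cid H) => mu0 [h0 [hc hmin]] /=.
set M := Num.max _ _.
have M1 : 1 <= M by rewrite le_max lexx.
have M0 : 0 < M by apply: lt_le_trans M1.
rewrite mulr_suml mulr_sumr; apply: ler_sum => j _.
case hv: (Vb mu0 (d (test n j))); last first.
  move: hv; rewrite /Vb /= => ->; rewrite mul0r.
  by apply: mulr_ge0 => //; apply: Hji_ge0.
move: (hv); rewrite /Vb /= => ->; rewrite mul1r.
have hmin' : is_minb (condj j d) mu0.
  split => //; split; first by apply/condjE.
  move=> mu' h' c'; rewrite leNgt; apply/negP => lt'.
  have hv' : Vb mu' (d (test n j)) by apply: Vb_mono hv => //; exact: ltW.
  by have := hmin mu' h' ((condjE hv').1 c'); rewrite leNgt lt'.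
rewrite /Hji (muj_some hmin') hv mul1r.
have /mu_condE : mu_cond alpha S w phat xs ys mu0 by [].
have e1 : (ncal j d mu0)%:R =
   (\sum_(i < n) ((ys (calib m i) \notin Cset alpha S w phat mu0 (xs (calib m i)))
                   && Dv alpha w phat mu0 (xs (calib m i)))%:R + 1) :> R.
  by rewrite /ncal hv natrD natr_sum.
rewrite -e1 -/M => hle.
have A0 : 0 < (ncal j d mu0)%:R :> R.
  by rewrite e1 ltr_pwDr // sumr_ge0.
have m0 : 0 < m%:R :> R by rewrite ltr0n.
rewrite -div1r ler_pdivrMr //.
rewrite (_ : _ * M = (alpha * n.+1%:R * M) / (m%:R * (ncal j d mu0)%:R)); last first.
  by field; rewrite !lt0r_neq0.
by rewrite ler_pdivlMr ?mulr_gt0 // mul1r mulrC.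
Qed.


Lemma Hji_sum j d :
  \sum_(i < n) Hji j (calib m i) d + Hji j (test n j) d <= 1.
Proof.
rewrite /Hji; case: muj => [mu|]; last by rewrite big1 ?add0r.
rewrite -mulr_suml -mulrDl -natr_sum -natrD -/(ncal j d mu).
have [->|nz] := eqVneq (ncal j d mu)%:R (0 : R); first by rewrite invr0 mulr0.
by rewrite divff.
Qed.

Definition inP (j : 'I_m) (l : 'I_N) : bool := (l < n)%N || (l == test n j).

Lemma ncalE j d mu : ncal j d mu = (\sum_(l < N | inP j l) Vb mu (d l))%N.
Proof.
rewrite big_split_ord /ncal; congr addn.
  by apply: eq_big => // i; rewrite /inP /= ltn_ord.
rewrite (big_pred1 j) // => j' /=.
rewrite /inP /= ltnNge leq_addr /=; apply/eqP/eqP => [h|->] //.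
by apply/val_inj; move: h => /(congr1 val) /= /eqP; rewrite eqn_add2l => /eqP.
Qed.

Lemma calib_test_neq i j : calib m i != test n j.
Proof.
apply/eqP => /(congr1 val) /= h; have := ltn_ord i; rewrite h ltnNge leq_addr //.
Qed.

Lemma swap_cond (i : 'I_n) j d mu (s := tperm (calib m i) (test n j)) :
  condj j (fun l => d (s l)) mu = condj j d mu.
Proof.
have Ps l : inP j (s l) = inP j l.
  rewrite /s; case: tpermP => [->|->|/eqP h1 /eqP h2].
  - by rewrite /inP /= ltn_ord eqxx orbT.
  - by rewrite /inP /= ltn_ord eqxx orbT.
  - by [].
have ec : ncal j (fun l => d (s l)) mu = ncal j d mu.
  rewrite !ncalE [RHS](reindex_inj (@perm_inj _ s)) /=.
  by apply: eq_big => // l; rewrite Ps.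
have ed : nD j (fun l => d (s l)) mu = nD j d mu.
  rewrite /nD; apply: eq_bigr => l lj; rewrite /s tpermD //.
    exact: calib_test_neq.
  apply/eqP => /(congr1 val) /= /eqP; rewrite eqn_add2l => /eqP /val_inj h.
  by rewrite h eqxx in lj.
by rewrite /condj ec ed.
Qed.


Lemma swap_ncal (i : 'I_n) j d mu (s := tperm (calib m i) (test n j)) :
  ncal j (fun l => d (s l)) mu = ncal j d mu.
Proof.
have Ps l : inP j (s l) = inP j l.
  rewrite /s; case: tpermP => [->|->|/eqP h1 /eqP h2].
  - by rewrite /inP /= ltn_ord eqxx orbT.
  - by rewrite /inP /= ltn_ord eqxx orbT.
  - by [].
rewrite !ncalE [RHS](reindex_inj (@perm_inj _ s)) /=.
by apply: eq_big => // l; rewrite Ps.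
Qed.

Lemma swap_Hji (i : 'I_n) j d (s := tperm (calib m i) (test n j)) :
  Hji j (calib m i) d = Hji j (test n j) (fun l => d (s l)).
Proof.
have em : muj j (fun l => d (s l)) = muj j d.
  rewrite /muj (_ : condj j (fun l => d (s l)) = condj j d) //.
  by apply/funext => mu; apply: swap_cond.
rewrite /Hji em; case: muj => // mu.
by rewrite swap_ncal /s tpermR.
Qed.


Definition ph (d : 'I_N -> X * Y) l c := phat c (d l).1.
Definition affA d l c (o : option 'I_k.+1) : R :=
  match o with Some c' => w c * ph d l c - w c' * ph d l c' | None => w c * ph d l c end.
Definition affB d l c (o : option 'I_k.+1) : R :=
  match o with Some c' => ph d l c - ph d l c' | None => ph d l c - (1 - alpha) end.
Definition aff d l c o (mu : R) : R := affA d l c o + mu * affB d l c o.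
Definition sg d (mu : R) l c o : bool * bool := (0 < aff d l c o mu, aff d l c o mu == 0).

Lemma lhat_lt d l c c' mu :
  (lhat alpha (w c') (ph d l c') mu < lhat alpha (w c) (ph d l c) mu) =
  (0 < aff d l c (Some c') mu).
Proof.
rewrite -subr_gt0 /aff /affA /affB /lhat; congr (0 < _); ring.
Qed.

Lemma lhat_eq d l c c' mu :
  (lhat alpha (w c) (ph d l c) mu == lhat alpha (w c') (ph d l c') mu) =
  (aff d l c (Some c') mu == 0).
Proof.
rewrite -subr_eq0 /aff /affA /affB /lhat; congr (_ == 0); ring.
Qed.

Lemma lhat_pos d l c mu :
  (0 < lhat alpha (w c) (ph d l c) mu) = (0 < aff d l c None mu).
Proof. by rewrite /aff /affA /affB /lhat. Qed.

Lemma pat_eq d d' mu mu' :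
  (forall l c o, sg d mu l c o = sg d' mu' l c o) ->
  (forall l c, ((d l).2 \in S c) = ((d' l).2 \in S c)) ->
  forall l, Vb mu (d l) = Vb mu' (d' l) /\ Db mu (d l) = Db mu' (d' l).
Proof.
move=> hs hmem l.
have hlt c c' : (0 < aff d l c c' mu) = (0 < aff d' l c c' mu').
  by have := hs l c c'; case.
have heq c c' : (aff d l c c' mu == 0) = (aff d' l c c' mu' == 0).
  by have := hs l c c'; case.
have eD : Db mu (d l) = Db mu' (d' l).
  rewrite /Db /Dv /Dmu; apply: eq_existsb => c.
  by rewrite -/(ph d l c) -/(ph d' l c) !lhat_pos hlt.
split => //; rewrite /Vb -/(Db mu (d l)) -/(Db mu' (d' l)) eD; congr andb.
rewrite /Cset /Cidx.
rewrite (@eq_pick _ _ [pred i | [forall j, (j != i) ==> prefer alpha w (fun i0 => phat i0 (d' l).1) mu' i j]]).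
  by rewrite hmem.
move=> i /=; apply: eq_forallb => j; congr (_ ==> _).
rewrite /prefer -/(ph d l i) -/(ph d l j) -/(ph d' l i) -/(ph d' l j).
by rewrite !lhat_lt !lhat_eq hlt heq.
Qed.

Lemma pat_cond j d d' mu mu' :
  (forall l, Vb mu (d l) = Vb mu' (d' l) /\ Db mu (d l) = Db mu' (d' l)) ->
  [/\ condj j d mu = condj j d' mu', ncal j d mu = ncal j d' mu' &
     forall i, Vb mu (d i) = Vb mu' (d' i)].
Proof.
move=> h.
have ec : ncal j d mu = ncal j d' mu'.
  by rewrite /ncal (h (test n j)).1; congr addn; apply: eq_bigr => i' _; rewrite (h _).1.
have ed : nD j d mu = nD j d' mu'.
  by rewrite /nD; apply: eq_bigr => i' _; rewrite (h _).2.
by split => [|//|i']; [rewrite /condj ec ed|exact: (h i').1].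
Qed.


Definition Kt := option ('I_N * 'I_k.+1 * option 'I_k.+1).
Definition cand d (kk : Kt) : R :=
  match kk with None => 0 | Some (l, c, o) => - affA d l c o / affB d l c o end.

Lemma aff_const d l c o mu mu' : mu <= mu' ->
  ~~ ((mu <= cand d (Some (l, c, o))) && (cand d (Some (l, c, o)) <= mu')) ->
  sg d mu l c o = sg d mu' l c o.
Proof.
rewrite /sg /aff /=; set a := affA d l c o; set b := affB d l c o => hmu.
have [->|b0] := eqVneq b 0; first by rewrite !mulr0.
set r := - a / b.
have e x : a + x * b = b * (x - r) by rewrite /r; field.
rewrite !e !mulf_eq0 (negbTE b0) /= !subr_eq0.
rewrite negb_and -!ltNge => /orP [h|h].
- have h1 : 0 < mu - r by rewrite subr_gt0.
  have h2 : 0 < mu' - r by rewrite subr_gt0 (lt_le_trans h).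
  by rewrite !pmulr_lgt0 // (gt_eqF h) (gt_eqF (lt_le_trans h hmu)).
- have h1 : mu - r < 0 by rewrite subr_lt0 (le_lt_trans hmu).
  have h2 : mu' - r < 0 by rewrite subr_lt0.
  by rewrite !nmulr_lgt0 // (lt_eqF h) (lt_eqF (le_lt_trans hmu h)).
Qed.

Lemma no_cand_same j d mu mu' : mu <= mu' ->
  (forall kk, mu <= cand d kk -> cand d kk <= mu' -> False) ->
  [/\ condj j d mu = condj j d mu', ncal j d mu = ncal j d mu' &
     forall i, Vb mu (d i) = Vb mu' (d i)].
Proof.
move=> hmu hk; apply: pat_cond; apply: pat_eq => // l c o.
apply: aff_const => //; apply/negP => /andP [h1 h2]; exact: hk h1 h2.
Qed.

Lemma ex_argmax (I : finType) (P : pred I) (F : I -> R) i0 : P i0 ->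
  exists i, P i /\ forall j, P j -> F j <= F i.
Proof. by move=> h; case: (arg_maxP F h) => i Pi hi; exists i; split => // j /hi. Qed.

Lemma ex_argmin (I : finType) (P : pred I) (F : I -> R) i0 : P i0 ->
  exists i, P i /\ forall j, P j -> F i <= F j.
Proof. by move=> h; case: (arg_minP F h) => i Pi hi; exists i; split => // j /hi. Qed.

Lemma min_is_cand j d mu : is_minb (condj j d) mu -> exists kk, cand d kk = mu.
Proof.
move=> [h0 [hc hmin]]; apply/not_existsP => hne.
have mu0 : 0 < mu.
  by rewrite lt_def h0 andbT; apply/eqP => e; apply: (hne None); rewrite e.
have [kl [Pl hl]] := @ex_argmax _ (fun kk : Kt => cand d kk < mu) (cand d) None mu0.
set lo := cand d kl in Pl hl.
have lo0 : 0 <= lo by exact: (hl None mu0).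
set q := (lo + mu) / 2.
have q1 : lo < q by rewrite /q; lra.
have q2 : q < mu by rewrite /q; lra.
have hk : forall kk, q <= cand d kk -> cand d kk <= mu -> False.
  move=> kk h1 h2; have h3 : cand d kk < mu.
    by rewrite lt_neqAle h2 andbT; apply/eqP; exact: hne.
  by have := hl kk h3; rewrite leNgt (lt_le_trans q1 h1).
have [e _ _] := @no_cand_same j d q mu (ltW q2) hk.
have q0 : 0 <= q by rewrite /q; lra.
have cq : condj j d q by rewrite e.
by have := hmin q q0 cq; rewrite leNgt q2.
Qed.


Definition mid d (k1 k2 : Kt) : R := (cand d k1 + cand d k2) / 2.

Definition isMinF j d (kk : Kt) : bool :=
  [&& 0 <= cand d kk, condj j d (cand d kk) &
      [forall k1, forall k2, ((0 <= mid d k1 k2) && (mid d k1 k2 < cand d kk))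
                             ==> ~~ condj j d (mid d k1 k2)]].

Lemma isMinFP j d kk : is_minb (condj j d) (cand d kk) <-> isMinF j d kk.
Proof.
split.
  move=> [h0 [hc hmin]]; rewrite /isMinF h0 hc /=.
  apply/forallP => k1; apply/forallP => k2; apply/implyP => /andP [q0 qc].
  by apply/negP => cq; have := hmin _ q0 cq; rewrite leNgt qc.
case/and3P => h0 hc /forallP hf; split => //; split => // mu' h' c'.
rewrite leNgt; apply/negP => lt'.
have hq k1 k2 : 0 <= mid d k1 k2 -> mid d k1 k2 < cand d kk -> ~~ condj j d (mid d k1 k2).
  by move=> a b; have /forallP /(_ k2) /implyP := hf k1; apply; rewrite a b.
have [[k1 e1]|hne] := pselect (exists k1, cand d k1 = mu').
  have em : mid d k1 k1 = mu' by rewrite /mid e1; field.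
  by have := hq k1 k1; rewrite em h' lt' c' => /(_ isT isT).
have mu0 : 0 < mu'.
  by rewrite lt_def h' andbT; apply/eqP => e; apply: hne; exists None; rewrite e.
have [kl [Pl hl]] := @ex_argmax _ (fun kk : Kt => cand d kk < mu') (cand d) None mu0.
have [kh [Ph hh]] := @ex_argmin _ (fun kk : Kt => mu' < cand d kk) (cand d) kk lt'.
set lo := cand d kl in Pl hl; set hi := cand d kh in Ph hh.
have lo0 : 0 <= lo by exact: (hl None mu0).
have hic : hi <= cand d kk by exact: hh kk lt'.
have qa : lo < mid d kl kh by rewrite /mid -/lo -/hi; lra.
have qb : mid d kl kh < hi by rewrite /mid -/lo -/hi; lra.
have hk a b : lo < a -> b < hi -> forall kk', a <= cand d kk' -> cand d kk' <= b -> False.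
  move=> la bh kk' h1 h2.
  have [h3|h3|h3] := ltgtP (cand d kk') mu'.
  - by have := hl kk' h3; rewrite leNgt (lt_le_trans la h1).
  - by have := hh kk' h3; rewrite leNgt (le_lt_trans h2 bh).
  - by apply: hne; exists kk'.
have cq : condj j d (mid d kl kh).
  have [le1|le1] := leP (mid d kl kh) mu'.
    by have [-> _ _] := @no_cand_same j d _ _ le1 (hk _ mu' qa Ph).
  by have [<- _ _] := @no_cand_same j d _ _ (ltW le1) (hk mu' _ Pl qb).
have q0 : 0 <= mid d kl kh by rewrite (le_trans lo0 (ltW qa)).
by have := hq kl kh q0 (lt_le_trans qb hic); rewrite cq.
Qed.

Definition Hfin j (i : 'I_N) d : R :=
  match [pick kk | isMinF j d kk] with
  | Some kk => (Vb (cand d kk) (d i))%:R / (ncal j d (cand d kk))%:R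
  | None => 0
  end.

Lemma Hji_fin j i d : Hji j i d = Hfin j i d.
Proof.
rewrite /Hji /Hfin; case: (mujP j d) => [[mu [-> hmu]]|[-> hno]].
  case: pickP => [kk /isMinFP hk|hn].
    by rewrite (is_minb_uniq hk hmu).
  have [kk ek] := min_is_cand hmu.
  by move: hmu; rewrite -ek => /isMinFP; rewrite hn.
case: pickP => [kk /isMinFP hk|//].
by exfalso; apply: hno; exists (cand d kk).
Qed.

End Det.


Section Meas.
Context (R : realType) (dX dY : measure_display) (X : measurableType dX)
  (Y : measurableType dY) (k n m : nat) (alpha : R)
  (S : 'I_k.+1 -> set Y) (w : 'I_k.+1 -> R) (phat : 'I_k.+1 -> X -> R).
Hypotheses (mS : forall c, measurable (S c)) (mph : forall c, measurable_fun setT (phat c)).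

Local Notation N := (n + m)%N.
Local Notation T := (N.-tuple (X * Y)%type).
Local Notation Kt := (@Kt k n m).

Definition Et := (Kt + (Kt * Kt))%type.
Definition muE (t : T) (e : Et) : R :=
  match e with
  | inl kk => cand alpha w phat (tnth t) kk
  | inr (k1, k2) => mid alpha w phat (tnth t) k1 k2
  end.

Lemma m_ph l c : measurable_fun setT (fun t : T => phat c (tnth t l).1).
Proof.
apply: measurableT_comp; first exact: mph.
apply: measurableT_comp; first exact: measurable_fst.
exact: measurable_tnth.
Qed.

Lemma m_affA l c o : measurable_fun setT (fun t : T => affA w phat (tnth t) l c o).
Proof.
case: o => [c'|] /=; rewrite /ph.
  apply: measurable_funB; apply: measurable_funM => //; exact: m_ph.
apply: measurable_funM => //; exact: m_ph.
Qed.

Lemma m_affB l c o : measurable_fun setT (fun t : T => affB alpha phat (tnth t) l c o).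
Proof.
case: o => [c'|] /=; rewrite /ph.
  apply: measurable_funB; exact: m_ph.
apply: measurable_funB => //; exact: m_ph.
Qed.

Lemma m_cand kk : measurable_fun setT (fun t : T => cand alpha w phat (tnth t) kk).
Proof.
case: kk => [[[l c] o]|] /=; last exact: measurable_cst.
apply: measurable_funM; first by apply: measurable_funN; exact: m_affA.
apply: measurableT_comp; first exact: meas_inv.
exact: m_affB.
Qed.

Lemma m_muE e : measurable_fun setT (fun t : T => muE t e).
Proof.
case: e => [kk|[k1 k2]] /=; first exact: m_cand.
rewrite /mid; apply: measurable_funM => //.
apply: measurable_funD; exact: m_cand.
Qed.

Lemma m_aff l c o e :
  measurable_fun setT (fun t : T => aff alpha w phat (tnth t) l c o (muE t e)).
Proof.
rewrite /aff; apply: measurable_funD; first exact: m_affA.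
apply: measurable_funM; [exact: m_muE|exact: m_affB].
Qed.


Definition It := ((Et * 'I_N * 'I_k.+1 * option 'I_k.+1 * bool) + ('I_N * 'I_k.+1)
                  + (Et + (Et * Kt)))%type.

Definition beta (i : It) (t : T) : bool :=
  match i with
  | inl (inl (e, l, c, o, b)) =>
      if b then 0 < aff alpha w phat (tnth t) l c o (muE t e)
      else aff alpha w phat (tnth t) l c o (muE t e) == 0
  | inl (inr (l, c)) => (tnth t l).2 \in S c
  | inr (inl e) => 0 <= muE t e
  | inr (inr (e, kk)) => muE t e < cand alpha w phat (tnth t) kk
  end.

Lemma m_beta i : measurable_fun setT (beta i).
Proof.
case: i => [[[[[[e l] c] o] b]|[l c]]|[e|[e kk]]] /=.
- case: b.
    apply: measurable_fun_ltr; [exact: measurable_cst|exact: m_aff].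
  apply: measurable_fun_eqr; [exact: m_aff|exact: measurable_cst].
- apply: (measurable_fun_bool true).
  rewrite [X in measurable X](_ : _ = (fun t : T => (tnth t l).2) @^-1` S c).
    have := (measurableT_comp measurable_snd (@measurable_tnth _ (X * Y)%type N l)) measurableT (S c) (mS c).
    by rewrite setTI.
  apply/seteqP; split => t /=.
    by move=> [_ /= h]; apply: set_mem; exact: h.
  by move=> h; split => //=; rewrite /beta; apply/mem_set.
- apply: measurable_fun_ler; [exact: measurable_cst|exact: m_muE].
- apply: measurable_fun_ltr; [exact: m_muE|exact: m_cand].
Qed.

Lemma beta_pat t t' e : (forall i, beta i t = beta i t') ->
  forall l, Vb alpha S w phat (muE t e) (tnth t l) = Vb alpha S w phat (muE t' e) (tnth t' l) /\
            Db alpha w phat (muE t e) (tnth t l) = Db alpha w phat (muE t' e) (tnth t' l).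
Proof.
move=> hb; apply: pat_eq.
  move=> l c o; rewrite /sg.
  have h1 := hb (inl (inl (e, l, c, o, true))).
  have h2 := hb (inl (inl (e, l, c, o, false))).
  rewrite /= in h1 h2; by rewrite h1 h2.
by move=> l c; exact: (hb (inl (inr (l, c)))).
Qed.

Lemma Hfin_det j i t t' : (forall i, beta i t = beta i t') ->
  Hfin alpha S w phat j i (tnth t) = Hfin alpha S w phat j i (tnth t').
Proof.
move=> hb.
have hc e := pat_cond j (beta_pat e hb).
have hM kk : isMinF alpha S w phat j (tnth t) kk = isMinF alpha S w phat j (tnth t') kk.
  rewrite /isMinF.
  have [c1 _ _] := hc (inl kk).
  have h0 := hb (inr (inl (inl kk))).
  rewrite /= in c1 h0; rewrite c1 h0; congr [&& _, _ & _].
  apply: eq_forallb => k1; apply: eq_forallb => k2.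
  have [c2 _ _] := hc (inr (k1, k2)).
  have h1 := hb (inr (inl (inr (k1, k2)))).
  have h2 := hb (inr (inr (inr (k1, k2), kk))).
  rewrite /= in c2 h1 h2; by rewrite c2 h1 h2.
rewrite /Hfin (eq_pick hM); case: pickP => // kk _.
have [_ e2 e3] := hc (inl kk); rewrite /= in e2 e3.
by rewrite e2 e3.
Qed.

Lemma m_Hfin j i : measurable_fun setT (fun t : T => Hfin alpha S w phat j i (tnth t)).
Proof.
apply: (@meas_finval _ _ _ _
   [seq (a%:R / b%:R : R) | a <- iota 0 2, b <- iota 0 n.+2]).
- move=> t; rewrite /Hfin; case: pickP => [kk _|_].
    apply/allpairsP; exists (nat_of_bool (Vb alpha S w phat (cand alpha w phat (tnth t) kk) (tnth t i)),
        ncal alpha S w phat j (tnth t) (cand alpha w phat (tnth t) kk)) => /=.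
    split => //; first by case: (Vb _ _ _ _ _ _).
    change (ncal alpha S w phat j (tnth t) (cand alpha w phat (tnth t) kk) \in iota 0 n.+2).
    rewrite mem_iota add0n ltnS /ncal.
    set mu := cand _ _ _ _ _.
    rewrite -addn1; apply: leq_add; last by case: (Vb _ _ _ _ _ _).
    apply: (@leq_trans (\sum_(i0 < n) 1)%N); first by apply: leq_sum => i0 _; case: (Vb _ _ _ _ _ _).
    by rewrite sum_nat_const card_ord muln1.
  by apply/allpairsP; exists (0%N, 0%N) => /=; split; rewrite ?inE ?mul0r.
- move=> v; apply: (@meas_det _ _ It beta) => //; first exact: m_beta.
  by move=> t t' hb; rewrite (Hfin_det j i hb).
Qed.

Lemma m_Hji j i : measurable_fun setT (fun t : T => Hji alpha S w phat j i (tnth t)).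
Proof.
rewrite (_ : (fun t : T => _) = (fun t : T => Hfin alpha S w phat j i (tnth t))).
  exact: m_Hfin.
by apply/funext => t; rewrite Hji_fin.
Qed.

End Meas.


Lemma le_int_nm (R : realType) d (T : measurableType d) (mu : {measure set T -> \bar R})
  (f g : T -> \bar R) : (forall x, (0 <= f x)%E) -> (forall x, (f x <= g x)%E) ->
  (\int[mu]_(x in setT) f x <= \int[mu]_(x in setT) g x)%E.
Proof.
move=> f0 fg; have g0 x : (0 <= g x)%E := le_trans (f0 x) (fg x).
rewrite !ge0_integralTE //; apply: ereal_sup_le => _ [h hf <-].
by exists h => // x; exact: le_trans (hf x) (fg x).
Qed.

Unset Implicit Arguments. Set Strict Implicit.

Theorem theorem2 (R : realType) (dX dY dO : measure_display)
  (X : measurableType dX) (Y : measurableType dY) (Omega : measurableType dO)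
  (Pr : probability Omega R) (PXY : probability (X * Y)%type R)
  (n m k : nat) (alpha B : R)
  (S : 'I_k.+1 -> set Y) (w : 'I_k.+1 -> R) (phat : 'I_k.+1 -> X -> R)
  (Xs : 'I_(n + m) -> Omega -> X) (Ys : 'I_(n + m) -> Omega -> Y) :
  0 < alpha < 1 ->
  (0 < m)%N ->
  (forall i, measurable (S i)) ->
  (forall i, 0 < w i < B) ->
  (forall i, measurable_fun setT (phat i)) ->
  (forall i x, 0 <= phat i x <= 1) ->
  iid Pr PXY (fun i omega => (Xs i omega, Ys i omega)) ->
  (forall x mu1 mu2, 0 <= mu1 -> mu1 < mu2 ->
     Cset alpha S w phat mu1 x `<=` Cset alpha S w phat mu2 x) ->
  (\int[Pr]_(omega in setT)
     (FDP n m alpha S w phat (fun i => Xs i omega) (fun i => Ys i omega))%:E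
   <= alpha%:E)%E.
Proof.
move=> ha hm mS hwB mph hp hiid hnest.
have hw : forall i, 0 < w i by move=> i; case/andP: (hwB i).
pose Zs := fun i omega => (Xs i omega, Ys i omega).
pose d omega := fun l => (Xs l omega, Ys l omega).
pose H j i omega := Hji alpha S w phat j i (d omega).
have tupE omega : tnth (tup Zs omega) = d omega.
  by apply/funext => l; rewrite tnth_mktuple.
have mH j i : measurable_fun setT (H j i).
  rewrite (_ : H j i = (fun t => Hji alpha S w phat j i (tnth t)) \o tup Zs).
    exact: measurableT_comp (m_Hji alpha w mS mph j i) (mtup hiid).
  by apply/funext => omega /=; rewrite tupE.
have mHE j i : measurable_fun setT (fun omega => (H j i omega)%:E).
  exact/measurable_EFinP.
have H0 j i omega : 0 <= H j i omega by apply: Hji_ge0.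
have key j : let I := (\int[Pr]_(omega in setT) (H j (test n j) omega)%:E)%E in
    I = (fine I)%:E /\ 0 <= fine I /\ fine I * n.+1%:R <= 1.
  move=> I.
  have I0 : (0 <= I)%E by apply: integral_ge0 => x _; rewrite lee_fin.
  have I1 : (I <= 1)%E.
    apply: (@le_trans _ _ (\int[Pr]_(omega in setT) (cst 1%E) omega)%E); last first.
      by rewrite integral_cst // mul1e probability_le1.
    apply: ge0_le_integral => //; first by move=> x _; rewrite lee_fin.
    move=> x _; rewrite lee_fin.
    have := Hji_sum alpha S w phat j (d x).
    have : 0 <= \sum_(i < n) Hji alpha S w phat j (calib m i) (d x).
      by apply: sumr_ge0 => i _; apply: Hji_ge0.
    rewrite /H; move: (Hji _ _ _ _ _ _ _) => a; move: (\sum_(i < n) _) => b.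
    by move=> b0 hab; apply: le_trans hab; rewrite lerDr.
  have fin : I \is a fin_num by rewrite ge0_fin_numE // (le_lt_trans I1) ?ltry.
  have IE : I = (fine I)%:E by rewrite fineK.
  split => //; split; first by rewrite -lee_fin -IE.
  have eqi (i : 'I_n) : (\int[Pr]_(omega in setT) (H j (calib m i) omega)%:E)%E = I.
    pose s := tperm (calib m i) (test n j).
    have := @exch _ _ _ _ _ _ _ _ _ hiid s (fun t => (Hji alpha S w phat j (test n j) (tnth t))%:E).
    have mF : measurable_fun setT (fun t : (n + m).-tuple (X * Y)%type =>
        (Hji alpha S w phat j (test n j) (tnth t))%:E).
      by apply/measurable_EFinP; exact: (m_Hji alpha w mS mph).
    have F0 : forall t : (n + m).-tuple (X * Y)%type,
        (0 <= (Hji alpha S w phat j (test n j) (tnth t))%:E)%E.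
      by move=> t; rewrite lee_fin; apply: Hji_ge0.
    move=> /(_ mF F0) e.
    rewrite /I (_ : (fun omega => (H j (test n j) omega)%:E) =
       (fun omega => (Hji alpha S w phat j (test n j) (tnth (tup Zs omega)))%:E)); last first.
      by apply/funext => omega; rewrite tupE.
    rewrite e; congr (integral _ _ _); apply/funext => omega; congr (_%:E).
    rewrite /H swap_Hji; congr (Hji _ _ _ _ _ _ _); apply/funext => l.
    by rewrite /tupP tnth_mktuple tupE.
  have mS' : measurable_fun setT (fun omega => \sum_(i < n) H j (calib m i) omega).
    by apply: measurable_sum => i; exact: mH.
  have eS : (fun omega => ((\sum_(i < n) H j (calib m i) omega + H j (test n j) omega)%:E)) =
      (fun omega => (\sum_(i < n) (H j (calib m i) omega)%:E + (H j (test n j) omega)%:E)%E).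
    by apply/funext => omega; rewrite EFinD sumEFin.
  have hle : (\int[Pr]_(omega in setT)
      (\sum_(i < n) (H j (calib m i) omega)%:E + (H j (test n j) omega)%:E) <= 1)%E.
    rewrite -eS.
    apply: (@le_trans _ _ (\int[Pr]_(omega in setT) (cst 1%E) omega)%E); last first.
      by rewrite integral_cst // mul1e probability_le1.
    apply: ge0_le_integral => //.
    - move=> x _; rewrite lee_fin; apply: addr_ge0 => //; exact: sumr_ge0.
    - by apply/measurable_EFinP; apply: measurable_funD.
    - by move=> x _; rewrite lee_fin; exact: Hji_sum.
  rewrite ge0_integralD // in hle; last 3 first.
  - by move=> x _; apply: sume_ge0 => i _; rewrite lee_fin.
  - by apply: emeasurable_sum => i; exact: mHE.
  - by move=> x _; rewrite lee_fin.
  rewrite ge0_integral_sum // in hle; last by move=> i x _; rewrite lee_fin.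
  rewrite (eq_bigr (fun _ => I)) in hle; last by move=> i _; exact: eqi.
  rewrite -/I IE sumEFin -EFinD lee_fin sumr_const card_ord in hle.
  by rewrite mulr_natr mulrSr.
pose c := alpha * n.+1%:R / m%:R.
have c0 : 0 <= c.
  by case/andP: ha => a0 _; rewrite divr_ge0 // mulr_ge0 // ltW.
have f0 omega : (0 <= (FDP n m alpha S w phat (fun i => Xs i omega) (fun i => Ys i omega))%:E)%E.
  rewrite lee_fin /FDP; case: mu_alpha => // mu; apply: divr_ge0.
    by apply: sumr_ge0.
  by rewrite le_max ler01.
have bnd omega : ((FDP n m alpha S w phat (fun i => Xs i omega) (fun i => Ys i omega))%:E <=
    (c%:E * \sum_(j < m) (H j (test n j) omega)%:E))%E.
  by rewrite sumEFin -EFinM lee_fin; exact: (FDP_bound ha hm hw hp hnest).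
apply: le_trans (le_int_nm Pr f0 bnd) _.
rewrite ge0_integralZl_EFin //; last 2 first.
- by move=> x _; apply: sume_ge0 => j _; rewrite lee_fin.
- by apply: emeasurable_sum => j; exact: mHE.
rewrite ge0_integral_sum //; last by move=> j x _; rewrite lee_fin.
rewrite (eq_bigr (fun j => (fine (\int[Pr]_(omega in setT) (H j (test n j) omega)%:E))%:E)); last first.
  by move=> j _; exact: (key j).1.
rewrite sumEFin -EFinM lee_fin.
set r := fun j => fine (\int[Pr]_(omega in setT) (H j (test n j) omega)%:E).
have hsum : \sum_(j < m) (r j * n.+1%:R) <= m%:R.
  apply: (@le_trans _ _ (\sum_(j < m) (1 : R))).
    by apply: ler_sum => j _; exact: (key j).2.2.
  by rewrite sumr_const card_ord.
have e : c * \sum_(j < m) r j = alpha / m%:R * \sum_(j < m) (r j * n.+1%:R).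
  by rewrite -mulr_suml /c; ring.
rewrite e; apply: (@le_trans _ _ (alpha / m%:R * m%:R)).
  by apply: ler_wpM2l => //; case/andP: ha => a0 _; rewrite divr_ge0 // ltW.
by rewrite divfK // pnatr_eq0 -lt0n.
Qed.
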